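(* Let $\bm\mu=(\mu_1,\dots,\mu_r)$ be finite positive Borel measures on the unit circle, each with infinite support, fix a square-root branch as in the context, and let $\bm n\in\mathbb N^r$. The following are equivalent: (i) there is a unique $\phi\in\operatorname{span}\{z^p\}_{p=-|\bm n|/2}^{|\bm n|/2}$ with coefficient of $z^{|\bm n|/2}$ equal to $1$ satisfying $\int\phi(z)z^{-p}\,d\mu_j(z)=0$ for $p=-n_j/2,\dots,n_j/2-1$, $j=1,\dots,r$; (ii) there is no nonzero $\phi\in\operatorname{span}\{z^p\}_{p=-|\bm n|/2}^{|\bm n|/2-1}$ satisfying these orthogonality relations; (iii) there is a unique $\psi\in\operatorname{span}\{z^p\}_{p=-|\bm n|/2}^{|\bm n|/2}$ with coefficient of $z^{-|\bm n|/2}$ equal to $1$ satisfying $\int\psi(z)z^{-p}\,d\mu_j(z)=0$ for $p=-n_j/2+1,\dots,n_j/2$, $j=1,\dots,r$; (iv) there is no nonzero $\psi\in\operatorname{span}\{z^p\}_{p=-|\bm n|/2+1}^{|\bm n|/2}$ satisfying the orthogonality relations in (iii); (v) $\det T_{\bm n}\neq0$, where $T_{\bm n}$ is the $|\bm n|\times|\bm n|$ matrix whose rows are indexed by pairs $(j,q)$, $j=1,\dots,r$, $q=n_j/2,n_j/2-1,\dots,-n_j/2+1$ (ordered by $j$, then by decreasing $q$), whose columns are indexed by $k=-|\bm n|/2,\dots,|\bm n|/2-1$, and whose $((j,q),k)$ entry is $\int z^{k}z^{q}\,d\mu_j(z)$ (with the convention $\det T_{\bm 0}=1$).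
   Context: $\partial\mathbb D=\{|z|=1\}$. Fix $t_0\in\mathbb R$ and define $z^{k/2}=|z|^{k/2}\exp(ik\arg_{[t_0,t_0+2\pi)}(z)/2)$, $k\in\mathbb Z$, with $\arg$ taking values in $[t_0,t_0+2\pi)$. For $\bm n=(n_1,\dots,n_r)$ of non-negative integers, $|\bm n|=n_1+\dots+n_r$. For integers or half-integers $a\le b$ with $b-a\in\mathbb Z$, $\operatorname{span}\{z^p\}_{p=a}^b$ is the span of $z^a,z^{a+1},\dots,z^b$ (the zero space if $a>b$). Condition (i) is the definition of $\bm n$ being ''$\phi$-normal''. *)

(* Defs.v *)
From HB Require Import structures.
From mathcomp Require Import all_boot all_order all_algebra.
From mathcomp Require Import all_classical all_reals all_analysis.
From mathcomp Require Import complex.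
Set Implicit Arguments. Unset Strict Implicit. Unset Printing Implicit Defensive.
Import Order.TTheory GRing.Theory Num.Theory.
Local Open Scope classical_set_scope.
Local Open Scope ring_scope.
Local Open Scope complex_scope.

Section Defs.
Variable R : realType.

(* A point z of the unit circle is represented by its angle t in
   [t0, t0 + 2 pi), i.e. z = e^{it} and arg_{[t0,t0+2pi)} z = t.
   zhalf k t  is  z^{k/2} = |z|^{k/2} exp(i k arg(z) / 2) with |z| = 1. *)
Definition zhalf (k : int) (t : R) : R[i] :=
  (cos (k%:~R * t / 2)) +i* (sin (k%:~R * t / 2)).

Definition cint (mu : {measure set R -> \bar R}) (f : R -> R[i]) : R[i] :=
  (Rintegral mu setT (fun t => complex.Re (f t))) +i* (Rintegral mu setT (fun t => complex.Im (f t))).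

(* mu (on angles) encodes a finite positive Borel measure on the unit
   circle (pushed forward by t |-> e^{it}) with infinite support *)
Definition circle_measure_inf_supp (t0 : R) (mu : {measure set R -> \bar R}) : Prop :=
  [/\ mu (~` `[t0, t0 + 2 * pi[) = 0%E,
      (mu setT < +oo)%E &
      forall S : set R, finite_set S -> (0 < mu (~` S))%E].

(* phi(z) = sum_{i < m} c_i z^{(2 i + e0)/2}  (exponents doubled) *)
Definition hpoly (m : nat) (e0 : int) (c : 'rV[R[i]]_m) (t : R) : R[i] :=
  \sum_(i < m) c 0 i * zhalf (e0 + 2 * (i : nat)%:Z) t.

(* The matrix T_n: block j has rows q = n_j/2, ..., -n_j/2+1 (row m has
   q = (n_j - 2m)/2), columns k = -|n|/2, ..., |n|/2 - 1 (column c has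
   k = (2c - |n|)/2). *)
Definition Tmat (r : nat) (n : 'I_r -> nat) (mu : 'I_r -> {measure set R -> \bar R}) :
  'M[R[i]]_(\sum_(j < r) n j) :=
  \mxcol_(j < r) \matrix_(m < n j, c < \sum_(l < r) n l)
     cint (mu j) (fun t => zhalf (2 * (c : nat)%:Z - (\sum_(l < r) n l)%N%:Z) t
                           * zhalf ((n j)%:Z - 2 * (m : nat)%:Z) t).

End Defs.

(* Main.v *)
Require Import Defs.
From HB Require Import structures.
From mathcomp Require Import all_boot all_order all_algebra.
From mathcomp Require Import all_classical all_reals all_analysis.
From mathcomp Require Import complex measurable_realfun.
From mathcomp Require Import zify.
Import Order.TTheory GRing.Theory Num.Theory.
Local Open Scope classical_set_scope.
Local Open Scope ring_scope.
Local Open Scope complex_scope.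
Section S.
Variable R : realType.
Implicit Type mu : {measure set R -> \bar R}.

Lemma int_trig mu (a : R) (s : bool) : (mu setT < +oo)%E ->
  mu.-integrable setT (EFin \o (fun t => if s then cos (a * t) else sin (a * t))).
Proof.
move=> fin; apply: measurable_bounded_integrable => //.
  case: s.
    apply: (@measurableT_comp _ _ _ _ _ _ cos _ ( *%R a)); last exact: mulrl_measurable.
    exact: (@continuous_measurable_fun R cos (@continuous_cos R)).
  apply: (@measurableT_comp _ _ _ _ _ _ sin _ ( *%R a)); last exact: mulrl_measurable.
  exact: (@continuous_measurable_fun R sin (@continuous_sin R)).
apply: (@sub_boundedl _ _ _ _ (cst (1:R))); last exact: bounded_cst.
by move=> x _ /=; rewrite normr1; case: s; [exact: cos_max|exact: sin_max].
Qed.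
Arguments int_trig {mu} a s.


Definition RI mu (f : R -> R) := mu.-integrable setT (EFin \o f).

Lemma RI_eqE mu f (g : R -> \bar R) : mu.-integrable setT g -> (forall t, g t = (f t)%:E) -> RI mu f.
Proof.
move=> hg e; apply: (@eq_integrable _ _ _ mu setT measurableT g) => // x _; by rewrite e.
Qed.
Arguments RI_eqE {mu f g}.


Lemma RI_eq mu f g : RI mu f -> (forall t, f t = g t) -> RI mu g.
Proof. by move=> hf e; apply: (RI_eqE hf) => t /=; rewrite e. Qed.
Arguments RI_eq {mu f g}.


Lemma RI_add mu f g : RI mu f -> RI mu g -> RI mu (fun t => f t + g t).
Proof.
move=> hf hg; apply: (RI_eqE (integrableD measurableT hf hg)) => x.
by rewrite /= EFinD.
Qed.
Arguments RI_add {mu f g}.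


Lemma RI_scale mu k f : RI mu f -> RI mu (fun t => k * f t).
Proof.
move=> hf; apply: (RI_eqE (integrableZl measurableT k hf)) => x.
by rewrite /= EFinM.
Qed.
Arguments RI_scale {mu} k {f}.


Lemma RI_sub mu f g : RI mu f -> RI mu g -> RI mu (fun t => f t - g t).
Proof.
move=> hf hg; apply: RI_add => //.
apply: (RI_eq (RI_scale (-1) hg)) => t.
by rewrite mulN1r.
Qed.
Arguments RI_sub {mu f g}.


Definition good mu (f : R -> R[i]) :=
  RI mu (fun t => complex.Re (f t)) /\ RI mu (fun t => complex.Im (f t)).

Lemma ReM (z w : R[i]) : complex.Re (z * w) = complex.Re z * complex.Re w - complex.Im z * complex.Im w.
Proof. by case: z; case: w. Qed.
Lemma ImM (z w : R[i]) : complex.Im (z * w) = complex.Re z * complex.Im w + complex.Im z * complex.Re w.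
Proof. by case: z; case: w. Qed.
Lemma ReD (z w : R[i]) : complex.Re (z + w) = complex.Re z + complex.Re w.
Proof. by case: z; case: w. Qed.
Lemma ImD (z w : R[i]) : complex.Im (z + w) = complex.Im z + complex.Im w.
Proof. by case: z; case: w. Qed.

Lemma good_add mu f g : good mu f -> good mu g -> good mu (fun t => f t + g t).
Proof.
move=> [f1 f2] [g1 g2]; split.
  by under eq_fun do rewrite ReD; apply: RI_add.
by under eq_fun do rewrite ImD; apply: RI_add.
Qed.
Arguments good_add {mu f g}.


Lemma good_scale mu c f : good mu f -> good mu (fun t => c * f t).
Proof.
move=> [f1 f2]; split.
  by under eq_fun do rewrite ReM; apply: RI_sub; apply: RI_scale.
by under eq_fun do rewrite ImM; apply: RI_add; apply: RI_scale.
Qed.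
Arguments good_scale {mu} c {f}.


Lemma good_zhalf mu k : (mu setT < +oo)%E -> good mu (zhalf k).
Proof.
move=> fin; split.
  apply: (RI_eq (int_trig (k%:~R / 2) true fin)) => x /=.
  by rewrite mulrAC.
apply: (RI_eq (int_trig (k%:~R / 2) false fin)) => x /=.
by rewrite mulrAC.
Qed.
Arguments good_zhalf {mu} k.


Lemma cintD mu f g : good mu f -> good mu g ->
  cint mu (fun t => f t + g t) = cint mu f + cint mu g.
Proof.
move=> [f1 f2] [g1 g2]; rewrite /cint.
under eq_Rintegral do rewrite ReD.
under [X in _ +i* X]eq_Rintegral do rewrite ImD.
by rewrite !RintegralD.
Qed.
Arguments cintD {mu f g}.


Lemma cintZ mu c f : good mu f ->
  cint mu (fun t => c * f t) = c * cint mu f.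
Proof.
move=> [f1 f2]; rewrite /cint.
under eq_Rintegral do rewrite ReM.
under [X in _ +i* X]eq_Rintegral do rewrite ImM.
rewrite RintegralB; [|done|exact: RI_scale|exact: RI_scale].
rewrite RintegralD; [|done|exact: RI_scale|exact: RI_scale].
rewrite !RintegralZl //.
by case: c.
Qed.
Arguments cintZ {mu} c {f}.


Lemma cint0 mu : cint mu (fun _ => 0) = 0.
Proof.
rewrite /cint /= !Rintegral_cst // !mul0r //.
Qed.

Lemma cint_sum mu m (c : 'I_m -> R[i]) (F : 'I_m -> R -> R[i]) :
  (forall i, good mu (F i)) ->
  cint mu (fun t => \sum_(i < m) c i * F i t) = \sum_(i < m) c i * cint mu (F i).
Proof.
move=> hF.
have gs : forall k (P : pred 'I_m) , good mu (fun t => \sum_(i <- k | P i) c i * F i t).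
  elim=> [|a k IH] P.
    under eq_fun do rewrite big_nil.
    by split; apply: (RI_eqE (g := cst 0%E)); [exact: integrable0|by []|exact: integrable0|by []].
  under eq_fun do rewrite big_cons.
  case: (P a) => //; apply: good_add => //; exact: good_scale.
suff H : forall s, cint mu (fun t => \sum_(i <- s) c i * F i t) = \sum_(i <- s) c i * cint mu (F i).
  exact: H.
elim=> [|a k IH].
  under eq_fun do rewrite big_nil; by rewrite big_nil cint0.
under eq_fun do rewrite big_cons.
rewrite big_cons cintD; [|exact: good_scale|exact: (gs k xpredT)].
by rewrite cintZ // IH.
Qed.

End S.

Section Main.
Variable R : realType.

Lemma expo1 (a b c d : int) : - a + 2 * b + - (2 * c - d) = 2 * b - a + (d - 2 * c).
Proof. lia. Qed.

Lemma expo2 (a d : int) (b c : nat) : - a + 2 * (1 + b)%N%:Z + - (2 * (c.+1)%:Z - d) = 2 * b%:Z - a + (d - 2 * c%:Z).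
Proof. lia. Qed.

Lemma mulcE (a b c d : R) : (a +i* b) * (c +i* d) = (a*c - b*d) +i* (a*d + b*c).
Proof. by []. Qed.

Lemma zhalfD (a b : int) (t : R) : zhalf a t * zhalf b t = zhalf (a + b) t.
Proof.
rewrite /zhalf mulcE.
have -> : (a + b)%:~R * t / 2 = a%:~R * t / 2 + b%:~R * t / 2 :> R.
  by rewrite intrD !mulrDl.
by rewrite cosD sinD [X in _ +i* X]addrC [sin _ * cos _]mulrC.
Qed.

Lemma CL (mu : {measure set R -> \bar R}) (fin : (mu setT < +oo)%E) M (e0 e1 : int)
  (c : 'rV[R[i]]_M) :
  cint mu (fun t => hpoly e0 c t * zhalf e1 t) =
  \sum_(i < M) c ord0 i * cint mu (zhalf (e0 + 2 * (i : nat)%:Z + e1)).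
Proof.
rewrite /hpoly.
under eq_fun do rewrite mulr_suml.
under eq_fun do under eq_bigr do rewrite -mulrA zhalfD.
apply: cint_sum => i; exact: good_zhalf.
Qed.

End Main.
Section LA.
Variable F : fieldType.

Lemma ker_det N (A : 'M[F]_N) : (forall x : 'cV_N, A *m x = 0 -> x = 0) <-> \det A != 0.
Proof.
split=> [H|dA x Ax].
  apply/negP; rewrite -det_tr => /det0P [v vn0 vA].
  move/eqP: vn0; apply; apply: trmx_inj; rewrite trmx0; apply: H.
  have: (v *m A^T)^T = 0 by rewrite vA trmx0.
  by rewrite trmx_mul trmxK.
have uA : A \in unitmx by rewrite unitmxE unitfE.
by rewrite -(mulKmx uA x) Ax mulmx0.
Qed.

Lemma KER N (A : 'M[F]_N) (Q : 'rV_N -> Prop) (HQ : forall c, Q c <-> A *m c^T = 0) :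
  (forall c, Q c -> c = 0) <-> \det A != 0.
Proof.
apply: (iff_trans _ (@ker_det _ A)); split=> H x.
  move=> Ax; apply: trmx_inj; rewrite trmx0; apply: H; apply/HQ; by rewrite trmxK.
by move/HQ/H => e; apply: trmx_inj; rewrite e trmx0.
Qed.

Definition ext N (p : 'I_N.+1) (x : 'cV[F]_N) (a : F) : 'rV[F]_N.+1 :=
  \row_i oapp (fun k => x k ord0) a (unlift p i).

Arguments ext {N}.
Lemma ext_p N p x a : @ext N p x a ord0 p = a.
Proof. by rewrite mxE unlift_none. Qed.
Lemma ext_l N p x a k : @ext N p x a ord0 (lift p k) = x k ord0.
Proof. by rewrite mxE liftK. Qed.

Arguments ext_p {N}.
Arguments ext_l {N}.
Lemma GEN N (A : 'M[F]_N) (b : 'cV_N) (p : 'I_N.+1) (Q : 'rV_N.+1 -> Prop)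
  (HQ : forall c, Q c <-> A *m (\col_k c ord0 (lift p k)) + c ord0 p *: b = 0) :
  (exists! c : 'rV[F]_N.+1, c ord0 p = 1 /\ Q c) <-> \det A != 0.
Proof.
apply: (iff_trans _ (@ker_det _ A)); split.
  move=> [c [[c1 Qc] U]] x Ax.
  pose c' := c + ext p x 0.
  have : c = c'.
    apply: U; split; first by rewrite /c' mxE ext_p c1 addr0.
    apply/HQ; move/HQ: Qc.
    have -> : \col_k c' ord0 (lift p k) = \col_k c ord0 (lift p k) + x.
      by apply/matrixP => k l; rewrite !mxE liftK (ord1 l).
    by rewrite /c' mxE ext_p addr0 mulmxDr Ax addr0.
  move/(congr1 (fun y => y - c)); rewrite subrr /c' addrC addKr => e.
  apply/matrixP => k l; rewrite (ord1 l) mxE.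
  by rewrite -(ext_l p x 0 k) -e mxE.
move=> H.
have uA : A \in unitmx by rewrite unitmxE unitfE; apply/ker_det.
have [x Ax] : exists x, A *m x + b = 0.
  by exists (- (invmx A *m b)); rewrite mulmxN mulKVmx // addNr.
exists (ext p x 1); split.
  split; first exact: ext_p.
  apply/HQ; rewrite ext_p scale1r.
  have -> : \col_k ext p x 1 ord0 (lift p k) = x.
    by apply/matrixP => k l; rewrite !mxE liftK (ord1 l).
  exact: Ax.
move=> c [c1 /HQ Qc]; rewrite c1 scale1r in Qc.
have e : \col_k c ord0 (lift p k) = x.
  apply/eqP; rewrite -subr_eq0; apply/eqP; apply: H.
  rewrite mulmxBr; apply/eqP; rewrite subr_eq0; apply/eqP; apply: (addIr b); by rewrite Qc Ax.
apply/matrixP => l i; rewrite (ord1 l).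
case: (unliftP p i) => [k ->|->]; last by rewrite ext_p c1.
by rewrite ext_l -e mxE.
Qed.
End LA.

Theorem proposition2p2 (R : realType) (t0 : R) (r : nat) (n : 'I_r -> nat)
    (mu : 'I_r -> {measure set R -> \bar R})
    (hmu : forall j, circle_measure_inf_supp t0 (mu j)) :
  let N := (\sum_(j < r) n j)%N in
  [<->
   (* (i) *)
   exists! c : 'rV[R[i]]_N.+1,
     c ord0 ord_max = 1 /\
     (forall (j : 'I_r) (m : 'I_(n j)),
        cint (mu j) (fun t => hpoly (- N%:Z) c t
                              * zhalf (- (2 * (m : nat)%:Z - (n j)%:Z)) t) = 0);
   (* (ii) *)
   forall c : 'rV[R[i]]_N,
     (forall (j : 'I_r) (m : 'I_(n j)),
        cint (mu j) (fun t => hpoly (- N%:Z) c t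
                              * zhalf (- (2 * (m : nat)%:Z - (n j)%:Z)) t) = 0) ->
     c = 0;
   (* (iii) *)
   exists! c : 'rV[R[i]]_N.+1,
     c ord0 ord0 = 1 /\
     (forall (j : 'I_r) (m : 'I_(n j)),
        cint (mu j) (fun t => hpoly (- N%:Z) c t
                              * zhalf (- (2 * (m.+1 : nat)%:Z - (n j)%:Z)) t) = 0);
   (* (iv) *)
   forall c : 'rV[R[i]]_N,
     (forall (j : 'I_r) (m : 'I_(n j)),
        cint (mu j) (fun t => hpoly (- N%:Z + 2) c t
                              * zhalf (- (2 * (m.+1 : nat)%:Z - (n j)%:Z)) t) = 0) ->
     c = 0;
   (* (v) *)
   \det (Tmat n mu) != 0].
Proof.
move=> N.
have fin : forall j, (mu j setT < +oo)%E by move=> j; case: (hmu j).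
pose Bm j : 'M[R[i]]_(n j, N) := \matrix_(m < n j, c < N)
     cint (mu j) (fun t => zhalf (2 * (c : nat)%:Z - N%:Z) t * zhalf ((n j)%:Z - 2 * (m : nat)%:Z) t).
have TB : Tmat n mu = \mxcol_j Bm j by [].
have Bent : forall j m i, Bm j m i = cint (mu j) (zhalf ((2 * (i : nat)%:Z - N%:Z) + ((n j)%:Z - 2 * (m : nat)%:Z))).
  move=> j m i; rewrite mxE; congr cint; apply: funext => t; exact: zhalfD.
have LA : forall (x : 'cV_N) (s : R[i]) (beta : forall j, 'I_(n j) -> R[i]),
    Tmat n mu *m x + s *: \mxcol_j (\matrix_(m < n j, k < 1) beta j m) = 0 <->
    forall j (m : 'I_(n j)), \sum_i Bm j m i * x i ord0 + s * beta j m = 0.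
  move=> x s beta.
  have -> : s *: \mxcol_j (\matrix_(m < n j, k < 1) beta j m) =
            \mxcol_j (s *: \matrix_(m < n j, k < 1) beta j m).
    by apply/matrixP => i k; rewrite !mxE.
  rewrite TB mxcol_mul -mxcolD -(mxcol0 (p_ := n)).
  split.
    move/eq_mxcolP => H j m; move: (H j) => /matrixP /(_ m ord0).
    by rewrite !mxE.
  move=> H; apply/eq_mxcolP => j; apply/matrixP => m k; rewrite (ord1 k) !mxE.
  exact: H.
have LA0 : forall x : 'cV_N, Tmat n mu *m x = 0 <->
    forall j (m : 'I_(n j)), \sum_i Bm j m i * x i ord0 = 0.
  move=> x; have e := LA x 0 (fun _ _ => 0); rewrite scale0r addr0 in e.
  apply: (iff_trans e); split => H j m; have := H j m; by rewrite mulr0 addr0.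
have Kii : forall (c : 'rV[R[i]]_N) j (m : 'I_(n j)),
   cint (mu j) (fun t => hpoly (- N%:Z) c t * zhalf (- (2 * (m : nat)%:Z - (n j)%:Z)) t)
   = \sum_i Bm j m i * c^T i ord0.
  move=> c j m; rewrite CL //; apply: eq_bigr => i _; rewrite Bent mxE mulrC.
  congr (cint _ (zhalf _) * _); lia.
have Kiv : forall (c : 'rV[R[i]]_N) j (m : 'I_(n j)),
   cint (mu j) (fun t => hpoly (- N%:Z + 2) c t * zhalf (- (2 * (m.+1 : nat)%:Z - (n j)%:Z)) t)
   = \sum_i Bm j m i * c^T i ord0.
  move=> c j m; rewrite CL //; apply: eq_bigr => i _; rewrite Bent mxE mulrC.
  congr (cint _ (zhalf _) * _); lia.
have Eii : (forall c : 'rV[R[i]]_N,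
     (forall (j : 'I_r) (m : 'I_(n j)),
        cint (mu j) (fun t => hpoly (- N%:Z) c t
                              * zhalf (- (2 * (m : nat)%:Z - (n j)%:Z)) t) = 0) ->
     c = 0) <-> \det (Tmat n mu) != 0.
  apply: KER => c; apply: iff_sym; apply: (iff_trans (LA0 _)).
  by split => H j m; have := H j m; rewrite Kii.
have Eiv : (forall c : 'rV[R[i]]_N,
     (forall (j : 'I_r) (m : 'I_(n j)),
        cint (mu j) (fun t => hpoly (- N%:Z + 2) c t
                              * zhalf (- (2 * (m.+1 : nat)%:Z - (n j)%:Z)) t) = 0) ->
     c = 0) <-> \det (Tmat n mu) != 0.
  apply: KER => c; apply: iff_sym; apply: (iff_trans (LA0 _)).
  by split => H j m; have := H j m; rewrite Kiv.
have Ei : (exists! c : 'rV[R[i]]_N.+1,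
     c ord0 ord_max = 1 /\
     (forall (j : 'I_r) (m : 'I_(n j)),
        cint (mu j) (fun t => hpoly (- N%:Z) c t
                              * zhalf (- (2 * (m : nat)%:Z - (n j)%:Z)) t) = 0))
     <-> \det (Tmat n mu) != 0.
  apply: (@GEN _ _ _ (\mxcol_j (\matrix_(m < n j, k < 1)
     cint (mu j) (zhalf (- N%:Z + 2 * N%:Z + - (2 * (m : nat)%:Z - (n j)%:Z))))) ord_max).
  move=> c; apply: iff_sym; apply: (iff_trans (LA _ _ _)).
  have K : forall j (m : 'I_(n j)),
     cint (mu j) (fun t => hpoly (- N%:Z) c t * zhalf (- (2 * (m : nat)%:Z - (n j)%:Z)) t)
     = \sum_i Bm j m i * (\col_k c ord0 (lift ord_max k)) i ord0 +
       c ord0 ord_max * cint (mu j) (zhalf (- N%:Z + 2 * N%:Z + - (2 * (m : nat)%:Z - (n j)%:Z))).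
    move=> j m; rewrite CL // (bigD1_ord ord_max) //= addrC; congr (_ + _).
    apply: eq_bigr => i _; rewrite Bent mxE mulrC.
    congr (cint _ (zhalf _) * _); rewrite /bump leqNgt ltn_ord add0n; exact: expo1.
  by split => H j m; have := H j m; rewrite K.
have Eiii : (exists! c : 'rV[R[i]]_N.+1,
     c ord0 ord0 = 1 /\
     (forall (j : 'I_r) (m : 'I_(n j)),
        cint (mu j) (fun t => hpoly (- N%:Z) c t
                              * zhalf (- (2 * (m.+1 : nat)%:Z - (n j)%:Z)) t) = 0))
     <-> \det (Tmat n mu) != 0.
  apply: (@GEN _ _ _ (\mxcol_j (\matrix_(m < n j, k < 1)
     cint (mu j) (zhalf (- N%:Z + 2 * 0%:Z + - (2 * (m.+1 : nat)%:Z - (n j)%:Z))))) ord0).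
  move=> c; apply: iff_sym; apply: (iff_trans (LA _ _ _)).
  have K : forall j (m : 'I_(n j)),
     cint (mu j) (fun t => hpoly (- N%:Z) c t * zhalf (- (2 * (m.+1 : nat)%:Z - (n j)%:Z)) t)
     = \sum_i Bm j m i * (\col_k c ord0 (lift ord0 k)) i ord0 +
       c ord0 ord0 * cint (mu j) (zhalf (- N%:Z + 2 * 0%:Z + - (2 * (m.+1 : nat)%:Z - (n j)%:Z))).
    move=> j m; rewrite CL // (bigD1_ord ord0) //= addrC; congr (_ + _).
    apply: eq_bigr => i _; rewrite Bent mxE mulrC.
    congr (cint _ (zhalf _) * _); exact: expo2.
  by split => H j m; have := H j m; rewrite K.
tfae.
- by move/Ei/Eii.
- by move/Eii/Eiii.
- by move/Eiii/Eiv.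
- by move/Eiv.
- by move/Ei.
Qed.
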